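(* Let $n, q$ be positive integers, let $\mathcal{A} = \langle V, V_0, V_1, E\rangle$ be an arena (over some set of colors $C$) with $n$ nodes, let $U \subseteq V$, and let $S_1$ be a $q$-state strategy of Player 0 in $\mathcal{A}$. Then there exists a chromatic $(q+1)^n$-state strategy $S_2$ of Player 0 in $\mathcal{A}$ such that $\mathsf{col}(S_2, U) \subseteq \mathsf{col}(S_1, U)$.
   Context: An arena over a set of colors $C$ is a tuple $\mathcal{A} = \langle V, V_0, V_1, E\rangle$ of finite sets with $V = V_0 \sqcup V_1$, $E \subseteq V \times C \times V$, and every node having at least one outgoing edge; for $e=(s,c,t)$ write $\mathsf{source}(e)=s$, $\mathsf{col}(e)=c$, $\mathsf{target}(e)=t$. A path is a nonempty finite or infinite sequence of edges $e_1e_2\ldots$ with $\mathsf{target}(e_i)=\mathsf{source}(e_{i+1})$; for each node $v$ there is also a $0$-length path $\lambda_v$ with source and target $v$. $\mathsf{col}$ extends letterwise to sequences of edges. A strategy of Player 0 is a function $S$ assigning to each finite path $p$ with $\mathsf{target}(p)\in V_0$ an edge $S(p)$ with $\mathsf{source}(S(p))=\mathsf{target}(p)$. A path $p=e_1e_2\ldots$ is consistent with $S$ if (when $\mathsf{source}(p)\in V_0$) $e_1=S(\lambda_{\mathsf{source}(p)})$ and for each $1\le i<|p|$ with $\mathsf{target}(e_i)\in V_0$ we have $e_{i+1}=S(e_1\ldots e_i)$; $0$-length paths are always consistent. For $v\in V$, $\mathsf{col}(S,v)\subseteq C^\omega$ is the set of $\mathsf{col}(p)$ over all infinite paths $p$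 from $v$ consistent with $S$, and $\mathsf{col}(S,U)=\bigcup_{v\in U}\mathsf{col}(S,v)$. A memory structure is $\mathcal{M}=\langle M, m_{init},\delta\rangle$ with $M$ finite, $m_{init}\in M$, $\delta: M\times E\to M$ (extended to finite edge sequences in the usual way). $S$ is an $\mathcal{M}$-strategy if for all finite paths $p_1,p_2$ with $\mathsf{target}(p_1)=\mathsf{target}(p_2)\in V_0$, $\delta(m_{init},p_1)=\delta(m_{init},p_2)$ implies $S(p_1)=S(p_2)$. $\mathcal{M}$ is chromatic if there is $\sigma: M\times C\to M$ with $\delta(m,e)=\sigma(m,\mathsf{col}(e))$ for all $m,e$. A (chromatic) $q$-state strategy is an $\mathcal{M}$-strategy for some (chromatic) memory structure $\mathcal{M}$ with $|M|=q$. *)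

(* Defs.v *)
From mathcomp Require Import all_boot.
Set Implicit Arguments. Unset Strict Implicit. Unset Printing Implicit Defensive.

(* An arena over colors C.  Edges form a finite type [Ed] with source, color,
   target maps; an edge is determined by its triple (E is a set of triples). *)
Record arena (C : Type) := Arena {
  node : finType;
  V0 : {set node};                       (* V1 is the complement ~: V0 *)
  edge : finType;
  src : edge -> node;
  col : edge -> C;
  tgt : edge -> node;
  edge_inj : forall e1 e2, src e1 = src e2 -> col e1 = col e2 ->
             tgt e1 = tgt e2 -> e1 = e2;
  out_edge : forall v, exists e, src e = v
}.

Section Defs.
Variables (C : Type) (A : arena C).

Fixpoint chain (s : seq (edge A)) : bool :=
  match s with
  | e1 :: ((e2 :: _) as t) => (tgt e1 == src e2) && chain t
  | _ => true
  end.

(* A finite path is represented as (v, s): its source node v and its edge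
   sequence s; s = [::] is the 0-length path lambda_v. *)
Definition is_fpath (v : node A) (s : seq (edge A)) : bool :=
  (if s is e :: _ then src e == v else true) && chain s.

Definition ftarget (v : node A) (s : seq (edge A)) : node A :=
  last v (map (@tgt _ A) s).

(* Strategy of Player 0: function on finite paths (values outside finite
   paths ending in V0 are irrelevant). *)
Definition strategy := node A -> seq (edge A) -> edge A.

Definition is_strategy (S : strategy) : Prop :=
  forall v s, is_fpath v s -> ftarget v s \in V0 A ->
    src (S v s) = ftarget v s.

Definition consistent_inf_path (S : strategy) (v : node A)
    (e : nat -> edge A) : Prop :=
  src (e 0) = v /\
  (forall k, tgt (e k) = src (e k.+1)) /\
  (v \in V0 A -> e 0 = S v [::]) /\
  (forall k, tgt (e k) \in V0 A -> e k.+1 = S v (mkseq e k.+1)).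

Definition colS (S : strategy) (v : node A) : (nat -> C) -> Prop :=
  fun w => exists e, consistent_inf_path S v e /\ w = (fun i => col (e i)).

Definition colSU (S : strategy) (U : {set node A}) : (nat -> C) -> Prop :=
  fun w => exists2 v, v \in U & colS S v w.

Definition mem_strategy (M : finType) (minit : M) (delta : M -> edge A -> M)
    (S : strategy) : Prop :=
  forall v1 s1 v2 s2, is_fpath v1 s1 -> is_fpath v2 s2 ->
    ftarget v1 s1 = ftarget v2 s2 -> ftarget v1 s1 \in V0 A ->
    foldl delta minit s1 = foldl delta minit s2 ->
    S v1 s1 = S v2 s2.

Definition q_state (q : nat) (S : strategy) : Prop :=
  exists (M : finType) (minit : M) (delta : M -> edge A -> M),
    #|M| = q /\ mem_strategy minit delta S.

Definition chromatic_q_state (q : nat) (S : strategy) : Prop :=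
  exists (M : finType) (minit : M) (delta : M -> edge A -> M),
    #|M| = q /\ mem_strategy minit delta S /\
    (exists sigma : M -> C -> M, forall m e, delta m e = sigma m (col e)).

End Defs.

(* Main.v *)
From Stdlib Require Import Classical ClassicalEpsilon FunctionalExtensionality.
Require Import Defs.
From mathcomp Require Import all_boot.
Set Implicit Arguments. Unset Strict Implicit. Unset Printing Implicit Defensive.

Definition decb (P : Prop) : bool := if excluded_middle_informative P then true else false.
Lemma decbP P : reflect P (decb P).
Proof. by rewrite /decb; case: excluded_middle_informative => H; [left|right]. Qed.

Lemma mkseqS T (f : nat -> T) n : mkseq f n.+1 = rcons (mkseq f n) (f n).
Proof. by rewrite /mkseq -addn1 iotaD map_cat cats1. Qed.

Section Paths.
Variables (C : Type) (A : arena C).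

Lemma chain_iota (e : nat -> edge A) : (forall k, tgt (e k) = src (e k.+1)) ->
  forall k m, chain (map e (iota m k)).
Proof.
move=> He; elim=> [|k IH] m //=.
case: k IH => [|k] IH //=; rewrite He eqxx /=; exact: (IH m.+1).
Qed.

Lemma fpath_mkseq (e : nat -> edge A) v : src (e 0) = v ->
  (forall k, tgt (e k) = src (e k.+1)) -> forall k, is_fpath v (mkseq e k).
Proof.
move=> H0 He [|k] //; rewrite /is_fpath /= H0 eqxx /=.
exact: (chain_iota He k.+1 0).
Qed.

Lemma ftarget_mkseqS (e : nat -> edge A) v k : ftarget v (mkseq e k.+1) = tgt (e k).
Proof. by rewrite /ftarget mkseqS map_rcons last_rcons. Qed.

Definition outE (t : node A) : edge A :=
  proj1_sig (constructive_indefinite_description _ (out_edge t)).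
Lemma outE_src t : src (outE t) = t.
Proof. by rewrite /outE; case: constructive_indefinite_description. Qed.
End Paths.

Lemma ph (T : finType) (P : nat -> T -> Prop) :
  (forall j j' y, j <= j' -> P j' y -> P j y) -> (forall j, exists y, P j y) ->
  exists y, forall j, P j y.
Proof.
move=> anti ne; apply: NNPP => H.
have H' : forall y, exists j, ~ P j y.
  move=> y; apply: NNPP => Hy; apply: H; exists y => j.
  by apply: NNPP => Hj; apply: Hy; exists j.
pose J y := proj1_sig (constructive_indefinite_description _ (H' y)).
have [y Py] := ne (\max_(y : T) J y).
have := proj2_sig (constructive_indefinite_description _ (H' y)).
apply; apply: anti Py; exact: (leq_bigmax y).
Qed.

Section KonigS.
Variables (T : finType) (D : nat -> T -> Prop) (R : nat -> T -> T -> Prop).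

Fixpoint Reach (k : nat) (y : T) (j : nat) (x : T) : Prop :=
  match j with
  | 0 => D k y /\ y = x
  | j'.+1 => D k y /\ exists z, R k y z /\ Reach k.+1 z j' x
  end.

Lemma Reach_D k y j x : Reach k y j x -> D k y.
Proof. by case: j => [|j] []. Qed.

Lemma Reach_snoc j : forall k y z x, Reach k y j z -> R (k + j) z x ->
  D (k + j).+1 x -> Reach k y j.+1 x.
Proof.
elim: j => [|j IH] k y z x /=.
  by move=> [Dy <-]; rewrite addn0 => Rz Dx; split=> //; exists x.
move=> [Dy [z1 [Rz1 Hr]]] Rz Dx; split=> //; exists z1; split=> //.
by apply: IH Hr _ _; rewrite addSnnS.
Qed.

Lemma Reach_back (back : forall k x, D k.+1 x -> exists y, D k y /\ R k y x) :
  forall j k x, D (k + j) x -> exists y, Reach k y j x.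
Proof.
elim=> [|j IH] k x.
  by rewrite addn0 => Dx; exists x.
rewrite addnS => Dx; have [y' [Dy' Ry']] := back _ _ Dx.
have [y Hy] := IH _ _ Dy'.
by exists y; apply: Reach_snoc Hy Ry' Dx.
Qed.

Lemma Reach_trunc j : forall k y x, Reach k y j.+1 x -> exists x', Reach k y j x'.
Proof.
elim: j => [|j IH] k y x /=.
  by move=> [Dy _]; exists y.
move=> [Dy [z [Rz Hr]]]; have [x' Hx'] := IH _ _ _ Hr.
by exists x'; split=> //; exists z.
Qed.

Lemma Reach_anti j j' k y x : j <= j' -> Reach k y j' x -> exists x', Reach k y j x'.
Proof.
move=> /subnK <-; elim: (j' - j) x => [|d IH] x; first by rewrite add0n; exists x.
by rewrite addSn => /Reach_trunc [x' /IH].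
Qed.

Definition goodK k y := forall j, exists x, Reach k y j x.

Lemma good0 (back : forall k x, D k.+1 x -> exists y, D k y /\ R k y x)
  (ne : forall k, exists x, D k x) : exists y, goodK 0 y.
Proof.
apply: (ph (P := fun j y => exists x, Reach 0 y j x)).
  by move=> j j' y le [x Hx]; apply: Reach_anti le Hx.
move=> j; have [x Dx] := ne j.
by have [y Hy] := Reach_back back (k:=0) Dx; exists y, x.
Qed.

Lemma good_succ k y : goodK k y -> exists z, R k y z /\ goodK k.+1 z.
Proof.
move=> g.
have [z Hz] := ph (P := fun j z => R k y z /\ exists x, Reach k.+1 z j x)
  (fun j j' z le '(conj r h) => conj r (let: ex_intro x Hx := h in Reach_anti le Hx))
  (fun j => let: ex_intro x Hx := g j.+1 in
            let: conj _ (ex_intro z (conj r h)) := Hx in ex_intro _ z (conj r (ex_intro _ x h))).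
by exists z; split; [case: (Hz 0) | move=> j; case: (Hz j)].
Qed.

Fixpoint seqgen (y0 : T) (step : nat -> T -> T) (n : nat) : T :=
  if n is n'.+1 then step n' (seqgen y0 step n') else y0.

Lemma konig (back : forall k x, D k.+1 x -> exists y, D k y /\ R k y x)
  (ne : forall k, exists x, D k x) :
  exists x : nat -> T, forall k, D k (x k) /\ R k (x k) (x k.+1).
Proof.
have [y0 g0] := good0 back ne.
pose step k y := match excluded_middle_informative (goodK k y) with
  | left H => proj1_sig (constructive_indefinite_description _ (good_succ H))
  | right _ => y end.
pose x := seqgen y0 step.
have gx : forall k, goodK k (x k) /\ R k (x k) (x k.+1).
  elim=> [|k [IH _]].
    rewrite /x /= /step; case: excluded_middle_informative => // H.
    by case: constructive_indefinite_description => z [].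
  have gk1 : goodK k.+1 (x k.+1).
    rewrite /x /= /step; case: excluded_middle_informative => // H.
    by case: constructive_indefinite_description => z [].
  split=> //; rewrite {2}/x /= /step; case: excluded_middle_informative => // H.
  by case: constructive_indefinite_description => z [].
exists x => k; have [g r] := gx k; split=> //.
by have [x0 /Reach_D] := g 0.
Qed.
End KonigS.

Section Constr.
Variables (C : Type) (A : arena C) (S1 : strategy A) (M : finType) (minit : M)
  (delta : M -> edge A -> M) (U : {set node A}).
Hypotheses (HS1 : is_strategy S1) (HM : mem_strategy minit delta S1).

Definition pick1 (t : node A) (m : M) : edge A :=
  match excluded_middle_informative (exists p : node A * seq (edge A),
     [/\ is_fpath p.1 p.2, ftarget p.1 p.2 = t & foldl delta minit p.2 = m]) with
  | left H => let p := proj1_sig (constructive_indefinite_description _ H) in S1 p.1 p.2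
  | right _ => outE t
  end.

Lemma pick1_spec v s t m : is_fpath v s -> ftarget v s = t -> t \in V0 A ->
  foldl delta minit s = m -> pick1 t m = S1 v s.
Proof.
move=> H1 H2 H3 H4; rewrite /pick1; case: excluded_middle_informative => [H|H];
  last by exfalso; apply: H; exists (v, s).
case: constructive_indefinite_description => [[v' s'] [G1 G2 G3]] /=.
by apply: HM => //; rewrite ?G2 ?G3.
Qed.

Lemma pick1_src t m : t \in V0 A -> src (pick1 t m) = t.
Proof.
move=> Ht; rewrite /pick1; case: excluded_middle_informative => [H|H];
  last exact: outE_src.
case: constructive_indefinite_description => [[v' s'] [G1 G2 G3]] /=.
by rewrite HS1 // G2.
Qed.

Definition FM := {ffun node A -> option M}.

Definition good2 (f : FM) (c : C) (u : node A) (e' : edge A) : bool :=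
  decb (exists m, [/\ f (src e') = Some m, col e' = c, tgt e' = u &
          (src e' \in V0 A -> e' = pick1 (src e') m)]).
Definition pk (f : FM) c u := [pick e' | good2 f c u e'].
Definition nxt (f : FM) c u : option M :=
  match pk f c u with
  | Some e' => match f (src e') with Some m => Some (delta m e') | None => None end
  | None => None end.
Definition sigm (f : FM) (c : C) : FM := [ffun u => nxt f c u].
Definition init2 : FM := [ffun u => if u \in U then Some minit else None].
Definition delta2 (f : FM) (e : edge A) : FM := sigm f (col e).
Definition S2 : strategy A := fun v s =>
  match foldl delta2 init2 s (ftarget v s) with
  | Some m => pick1 (ftarget v s) m
  | None => outE (ftarget v s) end.

Lemma pkP f c u e' : pk f c u = Some e' -> good2 f c u e'.
Proof. by rewrite /pk; case: pickP => // e'' H [<-]. Qed.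

Lemma S2_strategy : is_strategy S2.
Proof.
move=> v s _ Ht; rewrite /S2; case: (foldl delta2 init2 s (ftarget v s)) => [m|];
  [exact: pick1_src | exact: outE_src].
Qed.

Lemma S2_mem : mem_strategy init2 delta2 S2.
Proof. by move=> v1 s1 v2 s2 _ _ Ht _ Hf; rewrite /S2 Ht Hf. Qed.

Lemma S2_col w : colSU S2 U w -> colSU S1 U w.
Proof.
move=> [u uU [e [[He0 [Het [He1 He2]]] ->]]].
pose F k := foldl delta2 init2 (mkseq e k).
have FS k : F k.+1 = sigm (F k) (col (e k)).
  by rewrite /F mkseqS foldl_rcons.
pose t k := if k is k'.+1 then tgt (e k') else u.
have srce k : src (e k) = t k by case: k => [|k] //=; rewrite Het.
have tgte k : ftarget u (mkseq e k) = t k.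
  by case: k => [|k] //; rewrite ftarget_mkseqS.
have eS2 k : t k \in V0 A -> e k = S2 u (mkseq e k).
  case: k => [|k] /= Ht; first exact: He1.
  by apply: He2.
have ne k : exists x, F k x <> None.
  exists (t k); elim: k => [|k IH]; first by rewrite /F /= /init2 ffunE uU.
  case Hm: (F k (t k)) IH => [m|//] _.
  rewrite FS /sigm ffunE /nxt /pk.
  case: pickP => [e' /decbP [m' [-> _ _ _]] //| H0]; 
  have := H0 (e k); rewrite /good2; case: decbP => // nP _; exfalso; apply: nP; exists m.
  rewrite srce Hm; split=> // Ht.
  by rewrite eS2 // /S2 tgte -/(F k) Hm.
pose D k x := F k x <> None.
pose R k y x := exists e', pk (F k) (col (e k)) x = Some e' /\ src e' = y.
have back k x : D k.+1 x -> exists y, D k y /\ R k y x.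
  rewrite /D FS /sigm ffunE /nxt.
  case Hp: (pk _ _ _) => [e'|//]; case Hf: (F k (src e')) => [m|//] _.
  by exists (src e'); split; [rewrite Hf | exists e'].
have [x Hx] := konig back ne.
pose E k := odflt (e 0) (pk (F k) (col (e k)) (x k.+1)).
have Ek k : exists m, [/\ src (E k) = x k /\ tgt (E k) = x k.+1, col (E k) = col (e k),
   F k (x k) = Some m, (x k \in V0 A -> E k = pick1 (x k) m) &
   F k.+1 (x k.+1) = Some (delta m (E k))].
  have [_ [e' [Hp Hs]]] := Hx k.
  have := pkP Hp; move/decbP => [m [Hf Hc Ht Ha]].
  exists m; rewrite /E Hp /= -Hs; split=> //.
  by rewrite FS /sigm ffunE /nxt Hp Hf.
have aU : x 0 \in U.
  by have [D0 _] := Hx 0; move: D0; rewrite /D /F /= /init2 ffunE; case: (_ \in U).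
have inv k : F k (x k) = Some (foldl delta minit (mkseq E k)).
  elim: k => [|k IH]; first by rewrite /F /= /init2 ffunE aU.
  have [m [_ _ Hf _ ->]] := Ek k.
  by move: Hf; rewrite IH => -[<-]; rewrite mkseqS foldl_rcons.
have Esrc0 : src (E 0) = x 0 by have [m [[? _] _ _ _ _]] := Ek 0.
have Echain k : tgt (E k) = src (E k.+1).
  by have [m [[_ ->] _ _ _ _]] := Ek k; have [m' [[-> _] _ _ _ _]] := Ek k.+1.
exists (x 0) => //; exists E; split; last first.
  by apply: functional_extensionality => i; have [m [_ -> _ _ _]] := Ek i.
split=> //; split=> //; split.
  move=> Ha; have [m [_ _ Hf Hp _]] := Ek 0.
  rewrite Hp // (pick1_spec (v := x 0) (s := [::])) //.
  by move: Hf; rewrite inv => -[<-].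
move=> k Ht; have [m [_ _ Hf Hp _]] := Ek k.+1.
have [m0 [[_ Htg] _ _ _ _]] := Ek k.
rewrite -Htg in Hp; rewrite Hp //.
apply: pick1_spec => //.
- exact: fpath_mkseq.
- by rewrite ftarget_mkseqS.
- by move: Hf; rewrite inv => -[<-].
Qed.

End Constr.

Theorem theorem1 (C : Type) (A : arena C) (n q : nat) (U : {set node A})
    (S1 : strategy A) :
  0 < n -> 0 < q -> #|node A| = n ->
  is_strategy S1 -> q_state q S1 ->
  exists S2 : strategy A,
    is_strategy S2 /\ chromatic_q_state ((q + 1) ^ n) S2 /\
    (forall w, colSU S2 U w -> colSU S1 U w).
Proof.
move=> _ _ Hn HS1 [M [minit [delta [HMq HM]]]].
exists (S2 S1 minit delta U); split; first exact: S2_strategy.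
split; last exact: S2_col.
exists (FM A M), (init2 minit U), (delta2 S1 minit delta).
split; first by rewrite card_ffun card_option HMq Hn addn1.
split; first exact: S2_mem.
by exists (sigm S1 minit delta).
Qed.
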